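(* Let $p/q$ be an even rational parameter, $\omega=p+q$, and let $\alpha$ be the unique integer in $(0,\omega/2)$ with $2\alpha p\equiv \pm1 \pmod \omega$. For $k=0,1,\dots,(\omega-1)/2$, the lines of $\mathcal V$ of capacity $2k$ are the lines $x=n$ with $n\equiv k\alpha$ or $n\equiv \omega-k\alpha\pmod\omega$, and the lines of $\mathcal H$ of capacity $2k$ are the lines $y=n$ with $n\equiv k\alpha$ or $n\equiv\omega-k\alpha \pmod \omega$. For every odd integer $k$ with $1\le k\le \omega$, the lines of $\mathcal P$ and of $\mathcal Q$ of mass $k$ have $y$-intercept $(0,n)$ with $n\equiv k\alpha$ or $n\equiv \omega-k\alpha\pmod\omega$.
   Context: An even rational parameter is a rational $p/q\in(0,1)$, $p,q$ positive coprime integers, with $pq$ even. Put $\omega=p+q$, $P=2p/\omega$, $Q=2q/\omega$. Families of lines: $\mathcal H$ = horizontal lines $y=n$, $\mathcal V$ = vertical lines $x=n$ ($n\in\mathbb Z$), $\mathcal P$ = lines of slope $-P$ with integer $y$-intercept, $\mathcal Q$ = lines of slope $-Q$ with integer $y$-intercept. Functions mod $2\mathbb Z$, with values represented in $(-1,1]$: $F_H(x,y)=2Py$, $F_V(x,y)=2Px$, $F_P(x,y)=Py+P^2x+1$, $F_Q(x,y)=Py+PQx+1$. Each of these functions is constant on each line of the corresponding family. For a line $L$ in $\mathcal H$ (resp. $\mathcal V$) its capacity is $|\omega F_H(L)|$ (resp. $|\omega F_V(L)|$); for a line $L$ in $\mathcal P$ (resp. $\mathcal Q$) its mass is $|\omega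 F_P(L)|$ (resp. $|\omega F_Q(L)|$). (The number $\tau=\alpha/\omega$ is called the tune, so $k\alpha=k\tau\omega$.) *)

(* Defs.v *)
(* Exact rational arithmetic (all evaluation points are integral). *)
From mathcomp Require Import all_boot all_order all_algebra.
Set Implicit Arguments. Unset Strict Implicit. Unset Printing Implicit Defensive.
Import Order.TTheory GRing.Theory Num.Theory.
Local Open Scope ring_scope.

Definition even_param (p q : nat) : Prop :=
  (0 < p)%N /\ (p < q)%N /\ coprime p q /\ ~~ odd (p * q).

Definition omega (p q : nat) : nat := (p + q)%N.
Definition bigP (p q : nat) : rat := 2 * p%:R / (omega p q)%:R.
Definition bigQ (p q : nat) : rat := 2 * q%:R / (omega p q)%:R.

(* representative in (-1,1] of t mod 2Z *)
Definition red2 (t : rat) : rat := t - 2 * (Num.ceil ((t - 1) / 2))%:~R.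

(* the functions F_H, F_V, F_P, F_Q, mod 2Z, represented in (-1,1] *)
Definition F_H p q (x y : rat) : rat := red2 (2 * bigP p q * y).
Definition F_V p q (x y : rat) : rat := red2 (2 * bigP p q * x).
Definition F_P p q (x y : rat) : rat := red2 (bigP p q * y + bigP p q ^+ 2 * x + 1).
Definition F_Q p q (x y : rat) : rat := red2 (bigP p q * y + bigP p q * bigQ p q * x + 1).

(* lines: H_n = {y = n}, V_n = {x = n}, P_n = {y = -P x + n}, Q_n = {y = -Q x + n};
   each function is constant on the lines of its family; we evaluate at a point
   of the line: (0,n) for H_n, P_n, Q_n and (n,0) for V_n. *)
Definition capH p q (n : int) : rat := `|(omega p q)%:R * F_H p q 0 n%:~R|.
Definition capV p q (n : int) : rat := `|(omega p q)%:R * F_V p q n%:~R 0|.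
Definition massP p q (n : int) : rat := `|(omega p q)%:R * F_P p q 0 n%:~R|.
Definition massQ p q (n : int) : rat := `|(omega p q)%:R * F_Q p q 0 n%:~R|.

Definition pm_class (w k a : nat) (n : int) : bool :=
  (n == (k * a)%N %[mod w])%Z || (n == (w%:Z - (k * a)%N%:Z) %[mod w])%Z.

(* Main.v *)
Require Import Defs.
From mathcomp Require Import all_boot all_order all_algebra.
From mathcomp Require Import zify ring lra.
Import Order.TTheory GRing.Theory Num.Theory.
Local Open Scope ring_scope.

Lemma natzR (n : nat) : (n%:R : rat) = (n%:Z)%:~R.
Proof. by rewrite pmulrn. Qed.

Lemma red2_int (w : nat) (m : int) : (0 < w)%N ->
  exists r : int, (w%:R : rat) * red2 (m%:~R / w%:R) = r%:~R /\
    - (w%:Z) < r /\ r <= w%:Z /\ (2 * w%:Z %| m - r)%Z.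
Proof.
move=> w0.
have Wp : (0 : rat) < w%:R by rewrite ltr0n.
have Wn : (w%:R : rat) != 0 by rewrite lt0r_neq0.
set t := (m%:~R / w%:R : rat).
have mt : (m%:~R : rat) = w%:R * t by rewrite /t mulrC divfK.
rewrite /red2.
have := ceil_itv ((t - 1) / 2); move: (Num.ceil _) => c /andP [h1 h2].
have m1 : ((-1)%:~R : rat) = -1 by [].
rewrite intrD m1 in h1.
have two : (2%:~R : rat) = 2 by [].
exists (m - 2 * w%:Z * c).
split.
  rewrite -/c !intrD !intrN !intrM two -natzR mt. ring.
split; last split.
- rewrite -(ltr_int rat) !intrD !intrN !intrM two -natzR mt. nra.
- rewrite -(ler_int rat) !intrD !intrN !intrM two -natzR mt.
  have h2' : 0 <= c%:~R - (t-1)/2 by rewrite subr_ge0.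
  have := mulr_ge0 (ltW Wp) h2'.
  nra.
- apply/dvdzP; exists c; ring.
Qed.

Lemma small_dvd (d x : int) : 0 < d -> (d %| x)%Z -> - d < x -> x <= d -> x = 0 \/ x = d.
Proof.
move=> d0 /dvdzP [k ->] h1 h2.
have : k <= -1 \/ k = 0 \/ k = 1 \/ 2 <= k by lia.
case=> [hk|[->|[->|hk]]].
- exfalso. have : k * d <= - d by nia. lia.
- by left; rewrite mul0r.
- by right; rewrite mul1r.
- exfalso. have : 2 * d <= k * d by nia. lia.
Qed.

Lemma abs_char (w m r K : int) : 0 < w -> - w < r -> r <= w ->
  (2 * w %| m - r)%Z -> 0 <= K -> K <= w ->
  (`|r| = K <-> (2 * w %| m - K)%Z \/ (2 * w %| m + K)%Z).
Proof.
move=> w0 h1 h2 hd K0 Kw; split.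
- move=> hr. have : r = K \/ r = - K by lia.
  case=> hr'; rewrite hr' in hd; first by left.
  by right; rewrite opprK in hd.
- case=> hd'.
  + have : (2 * w %| r - K)%Z.
      have -> : r - K = (m - K) - (m - r) by ring.
      exact: rpredB.
    move/small_dvd; case; [lia|lia|lia|lia|lia].
  + have : (2 * w %| r + K)%Z.
      have -> : r + K = (m + K) - (m - r) by ring.
      exact: rpredB.
    move/small_dvd; case; [lia|lia|lia|lia|lia].
Qed.

Lemma inv_step (w a p e n s : int) : e * e = 1 -> (w %| 2 * a * p - e)%Z ->
  ((w %| 2 * p * n - s)%Z <-> (w %| n - e * a * s)%Z).
Proof.
move=> ee hw; split=> h.
- have -> : n - e * a * s = e * a * (2 * p * n - s) - e * n * (2 * a * p - e) + (1 - e * e) * n by ring.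
  rewrite ee subrr mul0r addr0.
  by apply: rpredB; apply: dvdz_mull.
- have -> : 2 * p * n - s = 2 * p * (n - e * a * s) + e * s * (2 * a * p - e) + (e * e - 1) * s by ring.
  rewrite ee subrr mul0r addr0.
  by apply: rpredD; apply: dvdz_mull.
Qed.

Lemma pm_iff (w k a : nat) (n : int) :
  pm_class w k a n = (w%:Z %| n - k%:Z * a%:Z)%Z || (w%:Z %| n + k%:Z * a%:Z)%Z.
Proof.
rewrite /pm_class !eqz_mod_dvd PoszM.
congr (_ || _).
have -> : n - (w%:Z - k%:Z * a%:Z) = (n + k%:Z * a%:Z) - w%:Z by ring.
apply/idP/idP => h.
- have -> : n + k%:Z * a%:Z = (n + k%:Z * a%:Z - w%:Z) + w%:Z by ring.
  by apply: rpredD => //; apply: dvdzz.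
- by apply: rpredB => //; apply: dvdzz.
Qed.

Lemma key (w a p k : nat) (e n : int) : e = 1 \/ e = -1 ->
  (w%:Z %| 2 * a%:Z * p%:Z - e)%Z ->
  ((w%:Z %| 2 * p%:Z * n - k%:Z)%Z \/ (w%:Z %| 2 * p%:Z * n + k%:Z)%Z) <-> pm_class w k a n.
Proof.
move=> he hw.
have ee : e * e = 1 by case: he => ->.
rewrite pm_iff.
have -> : 2 * p%:Z * n + k%:Z = 2 * p%:Z * n - (- k%:Z) by rewrite opprK.
rewrite (@inv_step _ _ _ _ n k%:Z ee hw) (@inv_step _ _ _ _ n (- k%:Z) ee hw).
have -> : n - e * a%:Z * - k%:Z = n + e * (k%:Z * a%:Z) by ring.
have -> : n - e * a%:Z * k%:Z = n - e * (k%:Z * a%:Z) by ring.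
case: he => ->; rewrite ?mul1r ?mulN1r ?opprK.
- by split; [case=> h; apply/orP; [left|right] | case/orP; [left|right]].
- by split; [case=> h; apply/orP; [right|left] | case/orP; [right|left]].
Qed.

Lemma capgen (w : nat) (X : int) (k : nat) : (0 < w)%N -> (2 * k <= w)%N ->
  (`|(w%:R : rat) * red2 ((2 * X)%R%:~R / w%:R)| = (2 * k)%N%:R <->
   (w%:Z %| X - k%:Z)%Z \/ (w%:Z %| X + k%:Z)%Z).
Proof.
move=> w0 kw.
have [r [e [h1 [h2 hd]]]] := @red2_int w (2 * X)%R w0.
rewrite e -intr_norm natzR.
have two0 : (2 : int) != 0 by [].
have -> : (w%:Z %| X - k%:Z)%Z = (2 * w%:Z %| 2 * X - (2 * k)%N%:Z)%Z.
  by rewrite (_ : 2 * X - (2 * k)%N%:Z = 2 * (X - k%:Z)) ?dvdz_mul2l // PoszM; ring.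
have -> : (w%:Z %| X + k%:Z)%Z = (2 * w%:Z %| 2 * X + (2 * k)%N%:Z)%Z.
  by rewrite (_ : 2 * X + (2 * k)%N%:Z = 2 * (X + k%:Z)) ?dvdz_mul2l // PoszM; ring.
have w0' : 0 < w%:Z by lia.
rewrite -(@abs_char w%:Z _ r _ w0' h1 h2 hd); [|lia|lia].
split; first by move/eqP; rewrite eqr_int => /eqP.
by move=> ->.
Qed.

Lemma massgen (w : nat) (X : int) (k : nat) : odd w -> odd k -> (1 <= k)%N -> (k <= w)%N ->
  (`|(w%:R : rat) * red2 ((2 * X + w%:Z)%R%:~R / w%:R)| = k%:R <->
   (w%:Z %| 2 * X - k%:Z)%Z \/ (w%:Z %| 2 * X + k%:Z)%Z).
Proof.
move=> wo ko k1 kw.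
have w0 : (0 < w)%N by lia.
have [r [e [h1 [h2 hd]]]] := @red2_int w (2 * X + w%:Z)%R w0.
rewrite e -intr_norm natzR.
have hw : w%:Z = 2 * (w./2)%:Z + 1.
  by move: (odd_double_half w); rewrite wo; lia.
have hk : k%:Z = 2 * (k./2)%:Z + 1.
  by move: (odd_double_half k); rewrite ko; lia.
set B := (w./2)%:Z in hw. set C := (k./2)%:Z in hk.
have two0 : (2 : int) != 0 by [].
have aux : forall Z : int, (2 * w%:Z %| 2 * Z)%Z = (w%:Z %| 2 * Z - w%:Z)%Z.
  move=> Z; rewrite dvdz_mul2l //; apply/idP/idP => h.
  - by apply: rpredB; [apply: dvdz_mull | apply: dvdzz].
  - have -> : Z = (B + 1) * (2 * Z - w%:Z + w%:Z) - Z * w%:Z.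
      by rewrite subrK hw; ring.
    apply: rpredB; last by apply: dvdz_mull; apply: dvdzz.
    by apply: dvdz_mull; apply: rpredD => //; apply: dvdzz.
have -> : 2 * X - k%:Z = 2 * (X + B - C) - w%:Z by rewrite hw hk; ring.
have -> : 2 * X + k%:Z = 2 * (X + B + C + 1) - w%:Z by rewrite hw hk; ring.
rewrite -!aux.
have -> : 2 * (X + B - C) = 2 * X + w%:Z - k%:Z by rewrite hw hk; ring.
have -> : 2 * (X + B + C + 1) = 2 * X + w%:Z + k%:Z by rewrite hw hk; ring.
have w0' : 0 < w%:Z by lia.
rewrite -(@abs_char w%:Z _ r _ w0' h1 h2 hd); [|lia|lia].
split; first by move/eqP; rewrite eqr_int => /eqP.
by move=> ->.
Qed.

Theorem lemma2p2 (p q : nat) (alpha : nat) :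
  even_param p q ->
  (0 < alpha)%N -> (2 * alpha < omega p q)%N ->
  ((2 * alpha * p)%N%:Z == 1 %[mod omega p q])%Z
    || ((2 * alpha * p)%N%:Z == -1 %[mod omega p q])%Z ->
  (forall k : nat, (k <= (omega p q).-1 %/ 2)%N ->
     forall n : int,
       (capV p q n = (2 * k)%N%:R <-> pm_class (omega p q) k alpha n) /\
       (capH p q n = (2 * k)%N%:R <-> pm_class (omega p q) k alpha n)) /\
  (forall k : nat, odd k -> (1 <= k)%N -> (k <= omega p q)%N ->
     forall n : int,
       (massP p q n = k%:R <-> pm_class (omega p q) k alpha n) /\
       (massQ p q n = k%:R <-> pm_class (omega p q) k alpha n)).
Proof.
move=> [p0 [pq [cop ev]]] a0 aw halpha.
have wodd : odd (omega p q).
  rewrite /omega oddD.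
  move: ev; rewrite oddM.
  case op: (odd p); case oq: (odd q) => //= _.
  exfalso; move: cop; rewrite /coprime => /eqP cop.
  have : (2 %| gcdn p q)%N by rewrite dvdn_gcd !dvdn2 op oq.
  by rewrite cop.
have w0 : (0 < omega p q)%N by rewrite /omega; lia.
have Wn : ((omega p q)%:R : rat) != 0 by rewrite pnatr_eq0 -lt0n.
have [e [he hw]] : exists e : int, (e = 1 \/ e = -1) /\
    ((omega p q)%:Z %| 2 * alpha%:Z * p%:Z - e)%Z.
  case/orP: halpha; rewrite eqz_mod_dvd !PoszM => h.
  - by exists 1; split => //; left.
  - by exists (-1); split => //; right.
have two : (2%:~R : rat) = 2 by [].
split.
- move=> k hk n.
  have kw : (2 * k <= omega p q)%N by move: hk; rewrite /omega; lia.
  have eqV : capV p q n = `|((omega p q)%:R : rat) *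
       red2 ((2 * (2 * p%:Z * n))%R%:~R / (omega p q)%:R)|.
    rewrite /capV /F_V /bigP; congr (`|_ * red2 _|).
    rewrite !intrM two -natzR; field; exact: Wn.
  have eqH : capH p q n = `|((omega p q)%:R : rat) *
       red2 ((2 * (2 * p%:Z * n))%R%:~R / (omega p q)%:R)|.
    rewrite /capH /F_H /bigP; congr (`|_ * red2 _|).
    rewrite !intrM two -natzR; field; exact: Wn.
  rewrite eqV eqH capgen //.
  rewrite -(@key (omega p q) alpha p k e n he hw).
  by split.
- move=> k ko k1 kw n.
  have eqP' : massP p q n = `|((omega p q)%:R : rat) *
       red2 ((2 * (p%:Z * n) + (omega p q)%:Z)%R%:~R / (omega p q)%:R)|.
    rewrite /massP /F_P /bigP; congr (`|_ * red2 _|).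
    rewrite !intrD !intrM two -!natzR; field; exact: Wn.
  have eqQ : massQ p q n = `|((omega p q)%:R : rat) *
       red2 ((2 * (p%:Z * n) + (omega p q)%:Z)%R%:~R / (omega p q)%:R)|.
    rewrite /massQ /F_Q /bigP; congr (`|_ * red2 _|).
    rewrite !intrD !intrM two -!natzR; field; exact: Wn.
  rewrite eqP' eqQ massgen // mulrA.
  rewrite -(@key (omega p q) alpha p k e n he hw).
  by split.
Qed.
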